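(* If $(\Phi,\Phi_f,D)$ is a domain-free s-compact information algebra, then its associated labeled information algebra $(\Psi,D)$ is a labeled s-compact information algebra (with $\Gamma_x=\{(\psi,x):\psi\in\Phi_f,\ \psi=\psi^{\Rightarrow x}\}$).
   Context: A domain-free information algebra $(\Phi,D)$ consists of a set $\Phi$, a lattice $D$, a combination $\otimes$ and a focusing $(\psi,x)\mapsto\psi^{\Rightarrow x}$ ($x\in D$) such that: $\otimes$ is associative, commutative with neutral element $e$; $(\psi^{\Rightarrow y})^{\Rightarrow x}=\psi^{\Rightarrow x\wedge y}$; $(\phi^{\Rightarrow x}\otimes\psi)^{\Rightarrow x}=\phi^{\Rightarrow x}\otimes\psi^{\Rightarrow x}$; every $\psi$ has some $x$ with $\psi^{\Rightarrow x}=\psi$; $\psi\otimes\psi^{\Rightarrow x}=\psi$. In both domain-free and labeled algebras, $\psi\le\phi$ iff $\psi\otimes\phi=\phi$; suprema refer to this order. $a\ll b$ means: for every directed $X$ with $b\le\vee X$ there is $c\in X$ with $a\le c$; $\Phi_f=\{\phi\in\Phi:\phi\ll\phi\}$. A domain-free $(\Phi,D)$ with $D$ having a top element is s-compact if there exists $\Gamma\subseteq\Phi$, closed under combination and containing $e$, such that every directed subset of $\Gamma$ has a supremum in $\Phi$, $\phi^{\Rightarrow x}=\vee\{\psi\in\Gamma:\psi=\psi^{\Rightarrow x}\ll\phi\}$ for all $\phi\in\Phi$, $x\in D$, and for every directed $X\subseteq\Gamma$ and $\phi\in\Gamma$ with $\phi\le\vee X$ there is $\psi\in X$ with $\phi\le\psi$;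 then necessarily $\Gamma=\Phi_f$, and one writes $(\Phi,\Phi_f,D)$. The associated labeled information algebra is $(\Psi,D)$ with $\Psi=\{(\phi,x)\in\Phi\times D:\phi=\phi^{\Rightarrow x}\}$, labeling $d(\phi,x)=x$, combination $(\phi,x)\otimes(\psi,y)=(\phi\otimes\psi,x\vee y)$, marginalization $(\phi,x)^{\downarrow y}=(\phi^{\Rightarrow y},y)$ for $y\le x$; neutral elements $e_x=(e,x)$. For a labeled information algebra, $\Phi_x$ denotes the elements with label $x$ and $\ll_x$ the way-below relation of $(\Phi_x,\le)$. A labeled s-compact information algebra is $(\Phi,\{\Gamma_x\}_{x\in D},D)$ with $D$ having a top element $\top$ and, for each $x$, $\Gamma_x\subseteq\Phi_x$ closed under combination, containing $e_x$, such that: (convergency) every directed $X\subseteq\Gamma_x$ has a supremum $\vee X\in\Phi_x$; (strong density) for all $\phi\in\Phi_x$, $\phi=\vee\{\psi^{\downarrow x}\in\Gamma_x:\ \psi\in\Phi,\ x\le d(\psi),\ \psi^{\downarrow x}\otimes e_\top\in\Gamma_\top,\ \psi^{\downarrow x}\ll_x\phi\}$; (compactness) for every directed $X\subseteq\Gamma_x$ and $\phi\in\Gamma_x$ with $\phi\le\vee X$ there is $\psi\in X$ with $\phi\le\psi$. *)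

(* Defs.v *)
From mathcomp Require Import all_boot all_order.
Import Order.Theory.
Set Implicit Arguments. Unset Strict Implicit. Unset Printing Implicit Defensive.
Local Open Scope order_scope.

Definition ile {T} (comb : T -> T -> T) (a b : T) : Prop := comb a b = b.

Definition idirected {T} (comb : T -> T -> T) (X : T -> Prop) : Prop :=
  (exists a, X a) /\
  forall a b, X a -> X b -> exists c, X c /\ ile comb a c /\ ile comb b c.

Definition is_sup_in {T} (comb : T -> T -> T) (U X : T -> Prop) (s : T) : Prop :=
  U s /\ (forall a, X a -> ile comb a s) /\
  (forall u, U u -> (forall a, X a -> ile comb a u) -> ile comb s u).

Definition way_below_in {T} (comb : T -> T -> T) (U : T -> Prop) (a b : T) : Prop :=
  forall X : T -> Prop, (forall c, X c -> U c) -> idirected comb X ->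
  forall s, is_sup_in comb U X s -> ile comb b s ->
  exists c, X c /\ ile comb a c.

Definition allT {T} : T -> Prop := fun _ => True.

Definition df_info_algebra {Phi : Type} {d : Order.disp_t} {D : latticeType d}
  (comb : Phi -> Phi -> Phi) (e : Phi) (focus : Phi -> D -> Phi) : Prop :=
  (forall a b c, comb a (comb b c) = comb (comb a b) c) /\
  (forall a b, comb a b = comb b a) /\
  (forall a, comb e a = a) /\
  (forall psi (x y : D), focus (focus psi y) x = focus psi (x `&` y)) /\
  (forall phi psi (x : D),
      focus (comb (focus phi x) psi) x = comb (focus phi x) (focus psi x)) /\
  (forall psi, exists x : D, focus psi x = psi) /\
  (forall psi (x : D), comb psi (focus psi x) = psi).

Definition df_finite {Phi : Type} (comb : Phi -> Phi -> Phi) (phi : Phi) : Prop :=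
  way_below_in comb allT phi phi.

Definition df_s_compact_with {Phi : Type} {d : Order.disp_t} {D : tLatticeType d}
  (comb : Phi -> Phi -> Phi) (e : Phi) (focus : Phi -> D -> Phi)
  (G : Phi -> Prop) : Prop :=
  (forall a b, G a -> G b -> G (comb a b)) /\ G e /\
  (forall X, (forall a, X a -> G a) -> idirected comb X ->
      exists s, is_sup_in comb allT X s) /\
  (forall phi (x : D),
      is_sup_in comb allT
        (fun psi => G psi /\ psi = focus psi x /\ way_below_in comb allT psi phi)
        (focus phi x)) /\
  (forall X phi, (forall a, X a -> G a) -> idirected comb X -> G phi ->
      forall s, is_sup_in comb allT X s -> ile comb phi s ->
      exists psi, X psi /\ ile comb phi psi).

Definition df_s_compact {Phi : Type} {d : Order.disp_t} {D : tLatticeType d}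
  (comb : Phi -> Phi -> Phi) (e : Phi) (focus : Phi -> D -> Phi) : Prop :=
  exists G : Phi -> Prop, df_s_compact_with comb e focus G.

(* The carrier is the subset [Psi] of an ambient type T; combination, marginalization
   ([marg a y] = a^{down y}, only meaningful for y <= lab a) and neutral elements are
   total functions on T. *)
Definition labeled_info_algebra {T : Type} {d : Order.disp_t} {D : latticeType d}
  (Psi : T -> Prop) (lab : T -> D) (comb : T -> T -> T) (marg : T -> D -> T)
  (neu : D -> T) : Prop :=
  (forall a b, Psi a -> Psi b -> Psi (comb a b)) /\
  (forall a y, Psi a -> y <= lab a -> Psi (marg a y)) /\
  (forall x, Psi (neu x)) /\
  (forall a b c, Psi a -> Psi b -> Psi c -> comb a (comb b c) = comb (comb a b) c) /\
  (forall a b, Psi a -> Psi b -> comb a b = comb b a) /\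
  (forall a b, Psi a -> Psi b -> lab (comb a b) = lab a `|` lab b) /\
  (forall a y, Psi a -> y <= lab a -> lab (marg a y) = y) /\
  (forall x, lab (neu x) = x) /\
  (forall a, Psi a -> comb a (neu (lab a)) = a) /\
  (forall x y, comb (neu x) (neu y) = neu (x `|` y)) /\
  (forall x y, x <= y -> marg (neu y) x = neu x) /\
  (forall a, Psi a -> marg a (lab a) = a) /\
  (forall a x y, Psi a -> x <= y -> y <= lab a -> marg (marg a y) x = marg a x) /\
  (forall a b, Psi a -> Psi b ->
      marg (comb a b) (lab a) = comb a (marg b (lab a `&` lab b))) /\
  (forall a x, Psi a -> x <= lab a -> comb a (marg a x) = a).

Definition labeled_s_compact {T : Type} {d : Order.disp_t} {D : tLatticeType d}
  (Psi : T -> Prop) (lab : T -> D) (comb : T -> T -> T) (marg : T -> D -> T)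
  (neu : D -> T) (G : D -> T -> Prop) : Prop :=
  labeled_info_algebra Psi lab comb marg neu /\
  forall x : D,
    let Phix := fun a => Psi a /\ lab a = x in
    (forall a, G x a -> Phix a) /\
    (forall a b, G x a -> G x b -> G x (comb a b)) /\
    G x (neu x) /\
    (forall X, (forall a, X a -> G x a) -> idirected comb X ->
        exists s, is_sup_in comb Phix X s) /\
    (forall phi, Phix phi ->
        is_sup_in comb Phix
          (fun chi => (exists psi, Psi psi /\ x <= lab psi /\ chi = marg psi x) /\
                      G x chi /\ G \top (comb chi (neu \top)) /\
                      way_below_in comb Phix chi phi)
          phi) /\
    (forall X phi, (forall a, X a -> G x a) -> idirected comb X -> G x phi ->
        forall s, is_sup_in comb Phix X s -> ile comb phi s ->
        exists psi, X psi /\ ile comb phi psi).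

Section Assoc.
Context {Phi : Type} {d : Order.disp_t} {D : latticeType d}.
Variables (comb : Phi -> Phi -> Phi) (e : Phi) (focus : Phi -> D -> Phi).

Definition assoc_Psi (p : Phi * D) : Prop := p.1 = focus p.1 p.2.
Definition assoc_lab (p : Phi * D) : D := p.2.
Definition assoc_comb (p q : Phi * D) : Phi * D := (comb p.1 q.1, p.2 `|` q.2).
Definition assoc_marg (p : Phi * D) (y : D) : Phi * D := (focus p.1 y, y).
Definition assoc_neu (x : D) : Phi * D := (e, x).
Definition assoc_Gamma (x : D) (p : Phi * D) : Prop :=
  df_finite comb p.1 /\ p.1 = focus p.1 x /\ p.2 = x.
End Assoc.

(* Main.v *)
Require Import Defs.
From mathcomp Require Import all_boot all_order.
Import Order.Theory.
Set Implicit Arguments. Unset Strict Implicit. Unset Printing Implicit Defensive.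
Local Open Scope order_scope.

Lemma df_basic (Phi : Type) (d : Order.disp_t) (D : tLatticeType d)
  (comb : Phi -> Phi -> Phi) (e : Phi) (focus : Phi -> D -> Phi) :
  df_info_algebra comb e focus ->
  (forall a, comb a a = a) /\ (forall a, comb a e = a) /\
  (forall x, focus e x = e) /\ (forall a, focus a \top = a) /\
  (forall a x, focus (focus a x) x = focus a x).
Proof.
case=> cA [cC [cE [fF [fC [fS fI]]]]].
have idem : forall a, comb a a = a.
  by move=> a; case: (fS a) => x hx; rewrite -{2}hx fI.
split=> //; split; first by move=> a; rewrite cC cE.
split; first by move=> x; rewrite -{2}(fI e x) cE.
split; last by move=> a x; rewrite fF meetxx.
by move=> a; case: (fS a) => x hx; rewrite -hx fF meet1x.
Qed.

Section Generic.
Variables (Phi : Type) (d : Order.disp_t) (D : tLatticeType d).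
Variables (comb : Phi -> Phi -> Phi) (e : Phi) (focus : Phi -> D -> Phi).
Hypothesis H : df_info_algebra comb e focus.

Local Notation le := (ile comb).
Local Notation wb := (way_below_in comb Defs.allT).

Let cA : forall a b c, comb a (comb b c) = comb (comb a b) c.
Proof. by case: H. Qed.
Let cC : forall a b, comb a b = comb b a.
Proof. by case: H => _ []. Qed.
Let cE : forall a, comb e a = a.
Proof. by case: H => _ [_ []]. Qed.
Let fF : forall psi (x y : D), focus (focus psi y) x = focus psi (x `&` y).
Proof. by case: H => _ [_ [_ []]]. Qed.
Let fC : forall phi psi (x : D),
      focus (comb (focus phi x) psi) x = comb (focus phi x) (focus psi x).
Proof. by case: H => _ [_ [_ [_ []]]]. Qed.
Let fI : forall psi (x : D), comb psi (focus psi x) = psi.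
Proof. by case: H => _ [_ [_ [_ [_ []]]]]. Qed.
Let idem : forall a, comb a a = a.
Proof. by case: (df_basic H). Qed.
Let ce : forall a, comb a e = a.
Proof. by case: (df_basic H) => _ []. Qed.
Let ef : forall x, focus e x = e.
Proof. by case: (df_basic H) => _ [_ []]. Qed.
Let ftop : forall a, focus a \top = a.
Proof. by case: (df_basic H) => _ [_ [_ []]]. Qed.

Lemma le_refl a : le a a.
Proof. exact: idem. Qed.
Lemma le_trans a b c : le a b -> le b c -> le a c.
Proof. rewrite /ile => h1 h2; by rewrite -h2 cA h1. Qed.
Lemma le_anti a b : le a b -> le b a -> a = b.
Proof. rewrite /ile => h1 h2; by rewrite -h2 cC h1. Qed.
Lemma le_combl a b : le a (comb a b).
Proof. by rewrite /ile cA idem. Qed.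
Lemma le_combr a b : le b (comb a b).
Proof. by rewrite cC; apply: le_combl. Qed.
Lemma le_lub a b c : le a c -> le b c -> le (comb a b) c.
Proof. rewrite /ile => h1 h2; by rewrite -cA h2 h1. Qed.
Lemma le_e a : le e a.
Proof. exact: cE. Qed.
Lemma le_focus a x : le (focus a x) a.
Proof. by rewrite /ile cC fI. Qed.
Lemma focus_mono a b x : le a b -> le (focus a x) (focus b x).
Proof.
move=> h; rewrite /ile -fC.
have -> : comb (focus a x) b = b by apply: le_trans h; apply: le_focus.
done.
Qed.

Lemma single_dir a : idirected comb (fun c => c = a).
Proof.
split; first by exists a.
by move=> b c -> ->; exists a; split => //; split; apply: le_refl.
Qed.
Lemma single_sup U a : U a -> is_sup_in comb U (fun c => c = a) a.
Proof.
move=> Ua; split => //; split; first by move=> c ->; apply: le_refl.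
by move=> u _ hu; apply: hu.
Qed.

Lemma wb_le a b : wb a b -> le a b.
Proof.
move=> h; case: (h (fun c => c = b) (fun _ _ => I) (single_dir b) b
   (single_sup (U:=Defs.allT) I) (le_refl b)) => c [-> ?] //.
Qed.
Lemma wb_mono a b c : le b c -> wb a b -> wb a c.
Proof.
move=> hbc h X hX hd s hs hcs; apply: (h X hX hd s hs); exact: le_trans hcs.
Qed.
Lemma wb_comb a b c : wb a c -> wb b c -> wb (comb a b) c.
Proof.
move=> ha hb X hX hd s hs hcs.
case: (ha X hX hd s hs hcs) => c1 [X1 h1].
case: (hb X hX hd s hs hcs) => c2 [X2 h2].
case: hd => _ /(_ c1 c2 X1 X2) [c3 [X3 [h13 h23]]].
exists c3; split => //; apply: le_lub; [exact: le_trans h13|exact: le_trans h23].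
Qed.
Lemma wb_e a : wb e a.
Proof. move=> X _ [[c Xc] _] s _ _; exists c; split => //; exact: le_e. Qed.

Lemma sup_focused X s x : (forall a, X a -> focus a x = a) ->
  is_sup_in comb Defs.allT X s -> focus s x = s.
Proof.
move=> hX [_ [ub lub]]; apply: le_anti; first exact: le_focus.
apply: lub => // a Xa; rewrite -(hX a Xa); apply: focus_mono; exact: ub.
Qed.

Variable G : Phi -> Prop.
Hypothesis HG : df_s_compact_with comb e focus G.

Let Gc : forall a b, G a -> G b -> G (comb a b).
Proof. by case: HG. Qed.
Let Ge : G e.
Proof. by case: HG => _ []. Qed.
Let Gconv : forall X, (forall a, X a -> G a) -> idirected comb X ->
      exists s, is_sup_in comb Defs.allT X s.
Proof. by case: HG => _ [_ []]. Qed.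
Let Gdens : forall phi (x : D),
      is_sup_in comb Defs.allT
        (fun psi => G psi /\ psi = focus psi x /\ wb psi phi)
        (focus phi x).
Proof. by case: HG => _ [_ [_ []]]. Qed.
Let Gcomp : forall X phi, (forall a, X a -> G a) -> idirected comb X -> G phi ->
      forall s, is_sup_in comb Defs.allT X s -> le phi s ->
      exists psi, X psi /\ le phi psi.
Proof. by case: HG => _ [_ [_ [_ ]]]. Qed.

Lemma dir_sup X : idirected comb X ->
  exists t, is_sup_in comb Defs.allT X t /\
    (forall psi, G psi -> le psi t -> exists c, X c /\ le psi c).
Proof.
move=> [[a0 Xa0] hd].
pose Z := fun g => G g /\ g = focus g \top /\ exists c, X c /\ wb g c.
have ZG : forall g, Z g -> G g by move=> g [].
have Zd : idirected comb Z.
  split; first by exists e; split => //; split; [by rewrite ef|exists a0; split => //; apply: wb_e].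
  move=> g1 g2 [G1 [_ [c1 [X1 w1]]]] [G2 [_ [c2 [X2 w2]]]].
  case: (hd c1 c2 X1 X2) => c3 [X3 [h13 h23]].
  exists (comb g1 g2); split; last by split; [apply: le_combl|apply: le_combr].
  split; first exact: Gc.
  split; first by rewrite ftop.
  exists c3; split => //; apply: wb_comb; [exact: wb_mono w1|exact: wb_mono w2].
case: (Gconv ZG Zd) => t ht.
have htX : is_sup_in comb Defs.allT X t.
  case: ht => _ [ub lub]; split => //; split.
    move=> c Xc; case: (Gdens c \top) => _ [_ lubc]; rewrite ftop in lubc.
    apply: lubc => // g [Gg [fg wg]]; apply: ub; split => //; split => //.
    by exists c.
  move=> u _ hu; apply: lub => // g [_ [_ [c [Xc wc]]]].
  apply: le_trans (hu c Xc); exact: wb_le.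
exists t; split => // psi Gpsi hpsi.
case: (Gcomp ZG Zd Gpsi ht hpsi) => g [[_ [_ [c [Xc wc]]]] hg].
exists c; split => //; apply: le_trans hg _; exact: wb_le.
Qed.

Lemma G_fin a : G a -> df_finite comb a.
Proof.
move=> Ga X _ hd s hs has.
case: (dir_sup hd) => t [ht hc]; apply: hc => //.
apply: le_trans has _; case: hs => _ [_ lub]; apply: lub => //.
by case: ht => _ [].
Qed.

Lemma fin_G a : df_finite comb a -> G a.
Proof.
move=> fa.
pose Y := fun psi => G psi /\ psi = focus psi \top /\ wb psi a.
have Yd : idirected comb Y.
  split; first by exists e; split => //; split; [by rewrite ef|apply: wb_e].
  move=> g1 g2 [G1 [_ w1]] [G2 [_ w2]].
  exists (comb g1 g2); split; last by split; [apply: le_combl|apply: le_combr].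
  split; first exact: Gc.
  split; first by rewrite ftop.
  exact: wb_comb.
have hs := Gdens a \top; rewrite ftop in hs.
case: (fa Y (fun _ _ => I) Yd a hs (le_refl a)) => c [[Gc' [_ wc]] hac].
by rewrite (le_anti hac (wb_le wc)).
Qed.

Lemma dir_sup_ex X : idirected comb X -> exists t, is_sup_in comb Defs.allT X t.
Proof. by move=> hd; case: (dir_sup hd) => t [? _]; exists t. Qed.

End Generic.

Theorem theorem4p8 (Phi : Type) (d : Order.disp_t) (D : tLatticeType d)
  (comb : Phi -> Phi -> Phi) (e : Phi) (focus : Phi -> D -> Phi) :
  df_info_algebra comb e focus ->
  df_s_compact comb e focus ->
  labeled_s_compact (assoc_Psi focus) assoc_lab (assoc_comb comb)
    (assoc_marg focus) (assoc_neu e) (assoc_Gamma comb focus).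
Proof.
move=> H [G HG].
have [idem [ce [ef [ftop fidem]]]] := df_basic H.
have [cA [cC [cE [fF [fC [fS fI]]]]]] := H.
have [Gc [Ge [Gconv [Gdens Gcomp]]]] := HG.
have fup : forall a (x y : D), a = focus a x -> x <= y -> a = focus a y.
  move=> a x y ha hxy; by rewrite ha fF (meet_r hxy).
have fcomb : forall a b (x : D), a = focus a x -> b = focus b x ->
    comb a b = focus (comb a b) x.
  move=> a b x ha hb; by rewrite [in RHS]ha fC -ha -hb.
have pfst : forall p q : Phi * D, ile (assoc_comb comb) p q -> ile comb p.1 q.1.
  by move=> [a x] [b y] h; exact: (congr1 fst h).
have pmk : forall a b (x : D), ile comb a b -> ile (assoc_comb comb) (a, x) (b, x).
  by move=> a b x h; rewrite /ile /assoc_comb /= h joinxx.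
have key : forall (x : D) (X : Phi * D -> Prop),
    (forall c, X c -> c.2 = x /\ c.1 = focus c.1 x) ->
    idirected (assoc_comb comb) X ->
    exists t, is_sup_in comb Defs.allT (fun a => X (a, x)) t /\
      t = focus t x /\ idirected comb (fun a => X (a, x)) /\
      is_sup_in (assoc_comb comb)
        (fun a => assoc_Psi focus a /\ assoc_lab a = x) X (t, x).
  move=> x X hX [[c0 Xc0] hd].
  have hd1 : idirected comb (fun a => X (a, x)).
    split.
      exists c0.1; case: c0 Xc0 => c y Xc; have [/= hy _] := hX _ Xc.
      by rewrite -hy.
    move=> a b Xa Xb; case: (hd _ _ Xa Xb) => [[c y]] [Xc [h1 h2]].
    have [/= hy _] := hX _ Xc; subst y.
    by exists c; split => //; split; [exact: (pfst _ _ h1)|exact: (pfst _ _ h2)].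
  case: (dir_sup_ex H HG hd1) => t ht.
  have tf : focus t x = t.
    apply: (sup_focused H _ ht) => a Xa; have [_ /= ->] := hX _ Xa.
    by rewrite fidem.
  exists t; split => //; split => //; split => //.
  case: ht => _ [ub lub].
  split; first by split => //.
  split.
    move=> [a y] Xa; have [/= hy _] := hX _ Xa; subst y.
    by apply: (pmk); apply: ub.
  move=> [u y] [hu /= hy] hub; subst y; apply: (pmk); apply: lub => // a Xa.
  exact: (pfst _ _ (hub _ Xa)).
split.
split.
  move=> [a x] [b y]; rewrite /assoc_Psi /= => ha hb.
  apply: fcomb; [apply: fup ha _|apply: fup hb _]; by rewrite ?leUl ?leUr.
split; first by move=> [a x] y _ _; rewrite /assoc_Psi /= fidem.
split; first by move=> x; rewrite /assoc_Psi /= ef.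
split; first by move=> [a x] [b y] [c z] _ _ _; rewrite /assoc_comb /= cA joinA.
split; first by move=> [a x] [b y] _ _; rewrite /assoc_comb /= cC joinC.
split; first by [].
split; first by [].
split; first by [].
split; first by move=> [a x] _; rewrite /assoc_comb /= ce joinxx.
split; first by move=> x y; rewrite /assoc_comb /assoc_neu /= idem.
split; first by move=> x y _; rewrite /assoc_marg /assoc_neu /= ef.
split; first by move=> [a x]; rewrite /assoc_Psi /assoc_marg /= => <-.
split; first by move=> [a z] x y _ hxy _; rewrite /assoc_marg /= fF (meet_l hxy).
split.
  move=> [a x] [b y]; rewrite /assoc_Psi /assoc_comb /assoc_marg /= => ha hb.
  by rewrite meetKU {1}ha fC -ha [in X in focus X x]hb fF meetC.
move=> [a x] y; rewrite /assoc_Psi /assoc_comb /assoc_marg /= => _ hy.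
by rewrite fI (join_l hy).
move=> x; cbv zeta.
split.
  by move=> [a y] [_ [/= ha ->]]; split.
split.
  move=> [a y] [b z] [fa [/= ha ->]] [fb [/= hb ->]]; split; first last.
    by split; [exact: fcomb|rewrite /= joinxx].
  exact: (G_fin H HG (Gc _ _ (fin_G H HG fa) (fin_G H HG fb))).
split.
  split; first exact: (G_fin H HG Ge).
  by split => //=; rewrite ef.
split.
  move=> X hX hd.
  have hX' : forall c, X c -> c.2 = x /\ c.1 = focus c.1 x.
    by move=> c /hX [_ [? ?]].
  case: (key x X hX' hd) => t [_ [_ [_ hs]]]; by exists (t, x).
split.
  move=> [p y] [hp /= hy]; subst y; rewrite /assoc_Psi /= in hp.
  split; first by split.
  split.
    move=> [c y] [_ [[fc [/= hc hy]] [_ wbc]]]; subst y.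
    have hP : forall c, c = (p, x) -> assoc_Psi focus c /\ assoc_lab c = x.
      by move=> c' ->.
    have hd : idirected (assoc_comb comb) (fun c => c = (p, x)).
      split; first by exists (p, x).
      move=> a b -> ->; exists (p, x); split => //.
      by split; apply: (pmk); apply: le_refl H _.
    have hs : is_sup_in (assoc_comb comb)
        (fun a => assoc_Psi focus a /\ assoc_lab a = x) (fun c => c = (p, x)) (p, x).
      split; first by split.
      split; first by move=> a ->; apply: (pmk); apply: le_refl H _.
      by move=> u _ hu; apply: hu.
    have [c' [-> h]] := wbc _ hP hd _ hs (pmk _ _ _ (le_refl H p)).
    exact: h.
  move=> [u y] [hu /= hy] hub; subst y; apply: (pmk).
  have := Gdens p x; rewrite -hp => -[_ [_ lub]].
  apply: lub => // psi [Gpsi [hpsi wpsi]].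
  apply: (pfst (psi, x) (u, x)); apply: (hub).
  split.
    exists (psi, x); split; first by [].
    split; first by [].
    by rewrite /assoc_marg /= -hpsi.
  split.
    by split; [exact: (G_fin H HG Gpsi)|split].
  split.
    rewrite /assoc_comb /assoc_neu /= ce joinx1.
    by split; [exact: (G_fin H HG Gpsi)|rewrite ftop].
  move=> X hX hd [s y] [[hs /= hy] [_ slub]] hps; subst y.
  have hX' : forall c, X c -> c.2 = x /\ c.1 = focus c.1 x.
    by move=> [c1 c2] /hX [hc1 /= hc2]; subst c2.
  case: (key x X hX' hd) => t [ht [tf [hd1 hsup]]].
  have st : ile comb s t.
    apply: (pfst (s, x) (t, x)); apply: (slub).
      by case: hsup.
    by case: hsup => _ [].
  have [c [Xc hc]] := wpsi _ (fun _ _ => I) hd1 t ht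
    (le_trans H (pfst _ _ hps) st).
  by exists (c, x); split => //; apply: (pmk).
move=> X [p y] hX hd [fp [/= hp hy]] [s z] [[hs /= hz] [_ slub]] hps; subst y z.
have hX' : forall c, X c -> c.2 = x /\ c.1 = focus c.1 x.
  by move=> c /hX [_ [? ?]].
case: (key x X hX' hd) => t [ht [tf [hd1 hsup]]].
have st : ile comb s t.
  apply: (pfst (s, x) (t, x)); apply: (slub).
    by case: hsup.
  by case: hsup => _ [].
have XG : forall a, X (a, x) -> G a.
  by move=> a /hX [fa _]; exact: (fin_G H HG fa).
have [c [Xc hc]] := Gcomp _ p XG hd1 (fin_G H HG fp) t ht
  (le_trans H (pfst _ _ hps) st).
by exists (c, x); split => //; apply: (pmk).
Qed.
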